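(* Let $\sigma$ be a boundedly erasing $k$-block substitution with $w_\epsilon\ne1^k$. Then: (i) $\sigma$ does not satisfy the optimality condition; (ii) there exists $n\in\mathbb N$ such that $f_\sigma^n(x)=0$ for every $x\in\mathbb I$ whose $f_\sigma$-orbit is disjoint from $\mathcal Q_2$.
   Context: Notation: $\mathbb I=[0,1]$. $\mathcal Q_2$ is the set of dyadic rationals in the open interval $(0,1)$. $\{0,1\}^*$ and $\{0,1\}^\omega$ denote finite and infinite binary words, and $\epsilon$ is the empty word. For a word $w$, set $0.w=\sum_iw_i2^{-i}$. For $x\in(0,1]$, $\widetilde x$ is the unique infinite binary expansion of $x$ not ending in $0^\infty$. Fix $k\ge2$. An erasing $k$-block substitution is a map $\sigma:\{0,1\}^k\to\{0,1\}^*$ with exactly one block $w_\epsilon$ such that $\sigma(w_\epsilon)=\epsilon$. $\sigma$ is alternating if there are $\sigma_1,\dots,\sigma_k:\{0,1\}\to\{0,1\}^*$ with $\sigma(b_1\cdots b_k)=\sigma_1(b_1)\cdots\sigma_k(b_k)$. It is then extended to all finite or infinite words by $\sigma(u)=\prod_j\sigma_{((j-1)\bmod k)+1}(u_j)$. $\sigma$ is completely erasing if it is erasing and alternating, and every $w\in\{0,1\}^*$ satisfies $\sigma^n(w)=\epsilon$ for some $n\in\mathbb N$; the least such $n$ is $\epsilon(w)$. $\sigma$ is boundedly erasing if it is completely erasing and $\sup_{w\in\{0,1\}^*}\epsilon(w)<\infty$. The map $f_\sigma:\mathbb I\to\mathbb I$ is defined by $f_\sigma(x)=0.\sigma(\widetilde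 x)$ if $x\in(0,1]$ and $\widetilde x\neq w_\epsilon^\infty$, and $f_\sigma(x)=0$ otherwise. Optimality condition: every $w\in\{0,1\}^\omega$ can be written as $w=\prod_{i\ge1}\sigma(b_i)$ with blocks $b_i\in\{0,1\}^k$ satisfying $\sigma(b_i)\ne\epsilon$. *)

(* Defs.v *)
From mathcomp Require Import all_boot.
From Stdlib Require Import Reals ClassicalEpsilon.
From Coquelicot Require Import Lim_seq Rbar.

Set Implicit Arguments.
Unset Strict Implicit.
Unset Printing Implicit Defensive.

Open Scope R_scope.

(* Infinite binary words are [nat -> bool]; letter i (0-based) has weight 2^-(i+1). *)
Definition iword := nat -> bool.

Fixpoint fin_val (w : seq bool) : R :=
  match w with
  | [::] => 0
  | b :: v => (if b then 1 else 0) / 2 + fin_val v / 2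
  end.

Definition iprefix (u : iword) (n : nat) : seq bool := mkseq u n.

Definition inf_val (u : iword) : R := real (Lim_seq (fun n => fin_val (iprefix u n))).

Definition block_subst (k : nat) := k.-tuple bool -> seq bool.

Definition erasing_with (k : nat) (sigma : block_subst k) (weps : k.-tuple bool) :=
  sigma weps = [::] /\ forall b, sigma b = [::] -> b = weps.

Definition erasing (k : nat) (sigma : block_subst k) :=
  exists weps, erasing_with sigma weps.

(* sigma(b_1...b_k) = sigma_1(b_1) ... sigma_k(b_k); components indexed 0..k-1
   (values of s at indices >= k are irrelevant) *)
Definition alternating_via (k : nat) (sigma : block_subst k)
  (s : nat -> bool -> seq bool) :=
  forall b : k.-tuple bool, sigma b = flatten [seq s i (nth false b i) | i <- iota 0 k].

Definition ext_fin (k : nat) (s : nat -> bool -> seq bool) (u : seq bool) : seq bool :=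
  flatten [seq s (j %% k)%nat (nth false u j) | j <- iota 0 (size u)].

Definition completely_erasing_via (k : nat) (sigma : block_subst k) s :=
  erasing sigma /\ alternating_via sigma s /\
  forall w : seq bool, exists n, iter n (ext_fin k s) w = [::].

Definition boundedly_erasing (k : nat) (sigma : block_subst k) :=
  exists s, completely_erasing_via sigma s /\
    exists N : nat, forall w : seq bool,
      exists n, (n <= N)%nat /\ iter n (ext_fin k s) w = [::].

Definition iblock (k : nat) (u : iword) (j : nat) : k.-tuple bool :=
  [tuple u (j * k + i)%nat | i < k].

Definition sigma_prefix (k : nat) (sigma : block_subst k) (u : iword) (j : nat) :=
  flatten [seq sigma (iblock k u i) | i <- iota 0 j].

Definition sigma_val (k : nat) (sigma : block_subst k) (u : iword) : R :=
  real (Lim_seq (fun j => fin_val (sigma_prefix sigma u j))).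

(* u is the infinite binary expansion of x not ending in 0^oo *)
Definition is_tilde (x : R) (u : iword) :=
  (forall n, exists m, (n <= m)%nat /\ u m = true) /\ x = inf_val u.

Definition tilde (x : R) : iword :=
  epsilon (inhabits (fun _ => true)) (is_tilde x).

Definition periodic (k : nat) (w : k.-tuple bool) : iword :=
  fun i => nth false w (i %% k).

Definition f_sigma (k : nat) (sigma : block_subst k) (weps : k.-tuple bool) (x : R) : R :=
  if excluded_middle_informative
       ((0 < x <= 1) /\ tilde x <> periodic weps)
  then sigma_val sigma (tilde x) else 0.

Definition dyadic01 (x : R) :=
  0 < x < 1 /\ exists a n : nat, x = INR a / 2 ^ n.

Definition optimal (k : nat) (sigma : block_subst k) :=
  forall w : iword, exists b : nat -> k.-tuple bool,
    (forall i, sigma (b i) <> [::]) /\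
    forall j, let p := flatten [seq sigma (b i) | i <- iota 0 j] in
      forall i, (i < size p)%nat -> nth false p i = w i.

(* Main.v *)
Require Import Defs.
From mathcomp Require Import all_boot.
From Stdlib Require Import Reals Lra Classical ClassicalEpsilon.
From Coquelicot Require Import Coquelicot.
Close Scope R_scope.

Definition pre (p r : seq bool) := exists q, r = p ++ q.

Lemma pre_refl p : pre p p.
Proof. exists [::]; by rewrite cats0. Qed.

Lemma pre_trans a b c : pre a b -> pre b c -> pre a c.
Proof. move=> [q1 ->] [q2 ->]; exists (q1 ++ q2); by rewrite catA. Qed.

Lemma pre_size a b : pre a b -> (size a <= size b)%N.
Proof. move=> [q ->]; by rewrite size_cat leq_addr. Qed.

Lemma ext_cat k s p q : pre (ext_fin k s p) (ext_fin k s (p ++ q)).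
Proof.
rewrite /ext_fin size_cat iotaD map_cat flatten_cat add0n.
eexists; f_equal; congr flatten; apply/eq_in_map => j; rewrite mem_iota add0n => /andP[_ hj].
by rewrite nth_cat hj.
Qed.

Lemma ext_pre k s p r : pre p r -> pre (ext_fin k s p) (ext_fin k s r).
Proof. move=> [q ->]; exact: ext_cat. Qed.

Lemma iter_ext_pre k s m p r : pre p r -> pre (iter m (ext_fin k s) p) (iter m (ext_fin k s) r).
Proof. elim: m => //= m IH h; apply: ext_pre; exact: IH. Qed.

Lemma iter_nil k s m : iter m (ext_fin k s) [::] = [::].
Proof. by elim: m => //= m ->. Qed.

Lemma sigma_prefixS k (sigma : block_subst k) u j :
  sigma_prefix sigma u j.+1 = sigma_prefix sigma u j ++ sigma (iblock k u j).
Proof. by rewrite /sigma_prefix -addn1 iotaD map_cat flatten_cat /= cats0. Qed.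

Lemma sigma_prefix_ext k (sigma : block_subst k) s u j :
  (0 < k)%N -> alternating_via sigma s ->
  sigma_prefix sigma u j = ext_fin k s (iprefix u (j * k)).
Proof.
move=> k0 alt; elim: j => [|j IH]; first by rewrite /sigma_prefix /ext_fin /=.
rewrite sigma_prefixS IH alt /ext_fin /iprefix mulSn addnC /mkseq iotaD map_cat.
rewrite size_cat !size_map !size_iota iotaD map_cat flatten_cat add0n.
congr (_ ++ _).
  congr flatten; apply/eq_in_map => i; rewrite mem_iota add0n => /andP[_ hi].
  by rewrite nth_cat size_map size_iota hi.
congr flatten.
have E : seq.iota (j * k) k = map (addn (j * k)) (seq.iota 0 k) by rewrite -iotaDl addn0.
rewrite [in X in _ = map _ X]E -map_comp; apply/eq_in_map => i; rewrite mem_iota add0n => /andP[_ hi] /=.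
rewrite nth_cat size_map size_iota ltnNge leq_addr /= addKn.
rewrite (nth_map 0%N); last by rewrite size_iota.
rewrite nth_iota //.
rewrite modnMDl modn_small // (nth_map (Ordinal hi)) ?size_enum_ord // nth_enum_ord //.
Qed.

Lemma bounded_kill k (sigma : block_subst k) s N :
  (forall w : seq bool, exists n, (n <= N)%N /\ iter n (ext_fin k s) w = [::]) ->
  forall w, iter N (ext_fin k s) w = [::].
Proof.
move=> H w; have [n [hn e]] := H w.
by rewrite -(subnK hn) iterD e iter_nil.
Qed.

Definition cat_blocks k (b : nat -> k.-tuple bool) : iword :=
  fun i => nth false (b (i %/ k)%N) (i %% k).

Lemma iblock_cat k (b : nat -> k.-tuple bool) i :
  (0 < k)%N -> iblock k (cat_blocks k b) i = b i.
Proof.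
move=> k0; apply: eq_from_tnth => x.
rewrite /iblock tnth_mktuple /cat_blocks divnMDl // modnMDl divn_small // modn_small //.
by rewrite addn0 (tnth_nth false).
Qed.

Lemma size_sigma_prefix k (sigma : block_subst k) u j :
  (forall i, sigma (iblock k u i) <> [::]) -> (j <= size (sigma_prefix sigma u j))%N.
Proof.
move=> H; elim: j => // j IH; rewrite sigma_prefixS size_cat.
have := H j; case: (sigma (iblock k u j)) => //= a l _.
by rewrite addnS ltnS (leq_trans IH) // leq_addr.
Qed.

Lemma pre_of_agree (w : iword) (p : seq bool) n :
  (n <= size p)%N -> (forall i, (i < size p)%N -> nth false p i = w i) -> pre (iprefix w n) p.
Proof.
move=> hn H; exists (drop n p).
have -> : iprefix w n = take n p.
  apply: (@eq_from_nth _ false); first by rewrite size_mkseq size_takel.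
  move=> i; rewrite size_mkseq => hi; rewrite nth_mkseq // nth_take // H //.
  exact: leq_trans hi hn.
by rewrite cat_take_drop.
Qed.

Lemma not_opt k (sigma : block_subst k) s N :
  (0 < k)%N -> alternating_via sigma s ->
  (forall w, iter N (ext_fin k s) w = [::]) -> ~ optimal sigma.
Proof.
move=> k0 alt kill opt.
pose B (w : iword) := proj1_sig (constructive_indefinite_description _ (opt w)).
have HB w : (forall i, sigma (B w i) <> [::]) /\
    forall j, let p := flatten [seq sigma (B w i) | i <- seq.iota 0 j] in
      forall i, (i < size p)%N -> nth false p i = w i.
  exact: (proj2_sig (constructive_indefinite_description _ (opt w))).
have step w n : pre (iprefix w n) (ext_fin k s (iprefix (cat_blocks k (B w)) (n * k))).
  rewrite -(@sigma_prefix_ext k sigma s _ _ k0 alt).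
  have E j : sigma_prefix sigma (cat_blocks k (B w)) j = flatten [seq sigma (B w i) | i <- seq.iota 0 j].
    by rewrite /sigma_prefix; congr flatten; apply: eq_map => i; rewrite iblock_cat.
  have [h1 h2] := HB w.
  apply: pre_of_agree.
    apply: size_sigma_prefix => i; rewrite iblock_cat //; exact: h1.
  rewrite E; exact: h2.
pose Ws := fix Ws m := if m is m'.+1 then cat_blocks k (B (Ws m')) else (fun _ => true) : iword.
have main m : forall n, exists L, pre (iprefix (Ws 0%N) n) (iter m (ext_fin k s) (iprefix (Ws m) L)).
  elim: m => [|m IH] n; first by exists n; exact: pre_refl.
  have [L hL] := IH n; exists (L * k)%N.
  rewrite iterSr; refine (pre_trans _ _ _ hL _); apply: iter_ext_pre; exact: step.
have [L hL] := main N 1%N.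
by have := pre_size _ _ hL; rewrite kill size_mkseq.
Qed.

Open Scope R_scope.

Definition bv (b : bool) : R := if b then 1 else 0.

Lemma bv_bounds b : 0 <= bv b <= 1.
Proof. case: b => /=; lra. Qed.

Lemma fin_val_cat p q : fin_val (p ++ q) = fin_val p + fin_val q / 2 ^ size p.
Proof.
elim: p => [|b v IH] /=; first by field.
rewrite IH; have h := pow_lt 2 (size v) ltac:(lra); field; lra.
Qed.

Lemma fin_val_bounds p : 0 <= fin_val p <= 1 - / 2 ^ size p.
Proof.
elim: p => [|b v IH] /=; first lra.
have h := pow_lt 2 (size v) ltac:(lra).
have hb : 0 <= (if b then 1 else 0) <= 1 by case: b; lra.
have e : / (2 * 2 ^ size v) = / 2 ^ size v / 2 by field; lra.
rewrite e; lra.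
Qed.

Lemma fin_val_dyadic p : exists a : nat, fin_val p = INR a / 2 ^ size p.
Proof.
elim: p => [|b v [a IH]] /=; first by exists 0%nat => /=; field.
exists ((if b then Nat.pow 2 (size v) else 0) + a)%nat.
rewrite plus_INR IH; have h := pow_lt 2 (size v) ltac:(lra).
case: b; rewrite ?pow_INR /=; try replace (1 + 1) with 2 by lra; field; lra.
Qed.

Lemma fin_val_pre p r : pre p r -> fin_val p <= fin_val r.
Proof.
move=> [q ->]; rewrite fin_val_cat.
have h := pow_lt 2 (size p) ltac:(lra); have [h1 _] := fin_val_bounds q.
have : 0 <= fin_val q / 2 ^ size p by apply: Rdiv_le_0_compat.
lra.
Qed.

Lemma aS (u : iword) (n : nat) :
  fin_val (iprefix u n.+1) = fin_val (iprefix u n) + bv (u n) / 2 ^ n.+1.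
Proof.
rewrite /iprefix mkseqS -cats1 fin_val_cat size_mkseq /= /bv.
have h := pow_lt 2 n ltac:(lra); field; lra.
Qed.

Lemma a_incr (u : iword) (n : nat) : fin_val (iprefix u n) <= fin_val (iprefix u n.+1).
Proof.
rewrite aS; have := bv_bounds (u n); have h := pow_lt 2 n.+1 ltac:(lra).
move=> [h1 _]; have : 0 <= bv (u n) / 2 ^ n.+1 by apply: Rdiv_le_0_compat.
lra.
Qed.

Lemma a_mono (u : iword) (n m : nat) : leq n m -> fin_val (iprefix u n) <= fin_val (iprefix u m).
Proof.
move=> h; rewrite -(subnK h); move: (subn m n) => d; elim: d => [|d IH]; first by rewrite add0n; lra.
by rewrite addSn; apply: Rle_trans IH (a_incr _ _).
Qed.

Lemma a_le (u : iword) (n m : nat) : fin_val (iprefix u m) <= fin_val (iprefix u n) + / 2 ^ n.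
Proof.
case: (leqP n m) => [hnm|hmn]; last first.
  have := a_mono u m n (ltnW hmn); have := pow_lt 2 n ltac:(lra).
  move=> h1 h2; have := Rinv_0_lt_compat _ h1; lra.
suff H : forall d, fin_val (iprefix u (n + d)) <= fin_val (iprefix u n) + / 2 ^ n - / 2 ^ (n + d).
  have := H (subn m n); rewrite subnKC //; have := pow_lt 2 m ltac:(lra).
  move=> h1 h2; have := Rinv_0_lt_compat _ h1; lra.
elim=> [|d IH]; first by rewrite addn0; lra.
rewrite addnS aS; have := bv_bounds (u (addn n d)).
have h := pow_lt 2 (n + d) ltac:(lra).
have e : / 2 ^ (addn n d).+1 = / 2 ^ (n + d) / 2 by rewrite /=; field; lra.
have e2 : bv (u (addn n d)) / 2 ^ (addn n d).+1 = bv (u (addn n d)) * (/ 2 ^ (n + d) / 2)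
  by rewrite /=; field; lra.
rewrite e e2 => hb.
have : bv (u (addn n d)) * (/ 2 ^ (n + d) / 2) <= / 2 ^ (n + d) / 2.
  have : 0 < / 2 ^ (n + d) / 2 by apply: Rdiv_lt_0_compat; [apply: Rinv_0_lt_compat|]; lra.
  nra.
lra.
Qed.

Lemma lim_bounds (a : nat -> R) M :
  (forall n, a n <= a n.+1) -> (forall n, a n <= M) ->
  (forall n, a n <= real (Lim_seq a)) /\ real (Lim_seq a) <= M.
Proof.
move=> hi hM.
have ex := ex_finite_lim_seq_incr a M hi hM.
have L := Lim_seq_correct' a ex.
split; first exact: is_lim_seq_incr_compare L hi.
have := is_lim_seq_le a (fun _ => M) _ _ hM L (is_lim_seq_const M); by [].
Qed.

Lemma inf_val_bounds (u : iword) (n : nat) :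
  fin_val (iprefix u n) <= inf_val u <= fin_val (iprefix u n) + / 2 ^ n.
Proof.
have [h1 h2] := lim_bounds (fun m => fin_val (iprefix u m)) _ (a_incr u) (a_le u n).
split; [exact: h1 | exact: h2].
Qed.

Lemma inf_val_le (u : iword) M : (forall n, fin_val (iprefix u n) <= M) -> inf_val u <= M.
Proof. move=> h; exact: (proj2 (lim_bounds _ _ (a_incr u) h)). Qed.

Lemma strict_lt (u v : iword) (n : nat) :
  iprefix u n = iprefix v n -> u n = false -> v n = true ->
  (exists m, leq n.+1 m /\ v m = true) -> inf_val u < inf_val v.
Proof.
move=> hp hu hv [m [hm vm]].
have [_ h1] := inf_val_bounds u n.+1.
have [h2 _] := inf_val_bounds v m.+1.
rewrite aS hu /bv in h1.
rewrite aS vm /bv in h2.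
have h3 := a_mono v n.+1 m hm.
rewrite aS hv /bv -hp in h3.
have := pow_lt 2 m.+1 ltac:(lra) => hpm.
have : 0 < 1 / 2 ^ m.+1 by apply: Rdiv_lt_0_compat; lra.
have e : 0 / 2 ^ n.+1 = 0 by field; have := pow_lt 2 n.+1 ltac:(lra); lra.
have e2 : 1 / 2 ^ n.+1 = / 2 ^ n.+1 by field; have := pow_lt 2 n.+1 ltac:(lra); lra.
rewrite e e2 in h1 h3.
lra.
Qed.

Definition infinitely (u : iword) := forall n, exists m, leq n m /\ u m = true.

Lemma inf_val_inj (u v : iword) :
  infinitely u -> infinitely v -> inf_val u = inf_val v -> forall i, u i = v i.
Proof.
move=> iu iv e.
have P : forall n, iprefix u n = iprefix v n.
  elim=> [//|n IH].
  have : u n = v n.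
    case hu: (u n); case hv: (v n) => //.
      have := strict_lt v u n (esym IH) hv hu (iu n.+1); lra.
    have := strict_lt u v n IH hu hv (iv n.+1); lra.
  by rewrite /iprefix !mkseqS -/(iprefix u n) -/(iprefix v n) IH => ->.
move=> i; have := congr1 (fun p => nth false p i) (P i.+1).
by rewrite /iprefix !nth_mkseq.
Qed.

Lemma nth_pre p r i : pre p r -> leq i.+1 (size p) -> nth false r i = nth false p i.
Proof. by move=> [q ->] hi; rewrite nth_cat hi. Qed.

Lemma pre_eq p r : pre p r -> size p = size r -> p = r.
Proof.
move=> [q ->]; rewrite size_cat => h.
have : size q = 0%nat by apply/eqP; rewrite -(eqn_add2l (size p)) addn0 -h.
by move/size0nil => ->; rewrite cats0.
Qed.

Lemma sp_chain k (sigma : block_subst k) u j j' :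
  leq j j' -> pre (sigma_prefix sigma u j) (sigma_prefix sigma u j').
Proof.
move=> h; rewrite -(subnK h); move: (subn j' j) => d; elim: d => [|d IH].
  rewrite add0n; exact: pre_refl.
rewrite addSn sigma_prefixS; apply: pre_trans IH _; eexists; reflexivity.
Qed.

Lemma stab (f : nat -> nat) :
  (forall j, leq (f j) (f j.+1)) -> forall M j1, (forall j, leq (f j) (f j1 + M)) ->
  exists j0, forall j, leq j0 j -> f j = f j0.
Proof.
move=> hi.
have mono : forall a b, leq a b -> leq (f a) (f b).
  move=> a b h; rewrite -(subnK h); move: (subn b a) => d; elim: d => // d IH.
  rewrite addSn; exact: leq_trans IH (hi _).
elim=> [|M IH] j1 H.
  exists j1 => j hj; apply/eqP; rewrite eqn_leq (mono j1 j hj) andbT.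
  by have := H j; rewrite addn0.
case: (classic (exists j2, leq j1 j2 /\ leq (f j1).+1 (f j2))) => [[j2 [h1 h2]]|hn].
  apply: (IH j2) => j; apply: leq_trans (H j) _.
  by rewrite addnS -addSn leq_add2r.
exists j1 => j hj; apply/eqP; rewrite eqn_leq (mono j1 j hj) andbT.
rewrite leqNgt; apply/negP => h; apply: hn; by exists j.
Qed.

Lemma dyad_contra p y : y = fin_val p -> y <> 0 -> ~ dyadic01 y -> False.
Proof.
move=> e h0 hd; apply: hd; have [h1 h2] := fin_val_bounds p.
have hp := pow_lt 2 (size p) ltac:(lra); have := Rinv_0_lt_compat _ hp => hi.
have [a ha] := fin_val_dyadic p.
split; first lra.
by exists a, (size p); rewrite e.
Qed.

Lemma sv_bounds k (sigma : block_subst k) u :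
  (forall j, fin_val (sigma_prefix sigma u j) <= sigma_val sigma u) /\
  (forall M, (forall j, fin_val (sigma_prefix sigma u j) <= M) -> sigma_val sigma u <= M).
Proof.
have hi : forall j, fin_val (sigma_prefix sigma u j) <= fin_val (sigma_prefix sigma u j.+1).
  move=> j; apply: fin_val_pre; apply: sp_chain; exact: leqnSn.
split.
  have hM : forall j, fin_val (sigma_prefix sigma u j) <= 1.
    move=> j; have [h1 h2] := fin_val_bounds (sigma_prefix sigma u j).
    have := pow_lt 2 (size (sigma_prefix sigma u j)) ltac:(lra) => hp.
    have := Rinv_0_lt_compat _ hp; lra.
  exact: (proj1 (lim_bounds _ _ hi hM)).
move=> M hM; exact: (proj2 (lim_bounds _ _ hi hM)).
Qed.

Lemma key k (sigma : block_subst k) (u : iword) (y : R) :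
  y = sigma_val sigma u -> y <> 0 -> ~ dyadic01 y ->
  forall n, exists j, pre (iprefix (tilde y) n) (sigma_prefix sigma u j).
Proof.
move=> ey y0 nd.
pose P := sigma_prefix sigma u.
have [svl svu] := sv_bounds k sigma u.
case: (classic (forall M, exists j, leq M.+1 (size (P j)))) => [unb|bnd]; last first.
  have [M hM] : exists M, forall j, leq (size (P j)) M.
    apply: NNPP => hh; apply: bnd => M; apply: NNPP => hj; apply: hh; exists M => j.
    rewrite leqNgt; apply/negP => h; apply: hj; by exists j.
  have [j0 hj0] := stab (fun j => size (P j)) (fun j => pre_size _ _ (sp_chain k sigma u j j.+1 (leqnSn j))) M 0%nat
    (fun j => leq_trans (hM j) (leq_addl _ _)).
  have eqP0 : forall j, leq j0 j -> P j = P j0.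
    move=> j hj; symmetry; apply: pre_eq; [exact: sp_chain | by rewrite hj0].
  exfalso; apply: (dyad_contra (P j0) y) => //.
  apply: Rle_antisym; last by rewrite ey; apply: svl.
  rewrite ey; apply: svu => j; case: (leqP j0 j) => h.
    have := eqP0 j h; rewrite /P => ->; lra.
  apply: fin_val_pre; apply: sp_chain; exact: ltnW.
pose J i := proj1_sig (constructive_indefinite_description _ (unb i)).
have hJ i : leq i.+1 (size (P (J i))) := proj2_sig (constructive_indefinite_description _ (unb i)).
pose W : iword := fun i => nth false (P (J i)) i.
have Wspec : forall j i, leq i.+1 (size (P j)) -> nth false (P j) i = W i.
  move=> j i hi; rewrite /W; case: (leqP j (J i)) => h.
    by rewrite (nth_pre _ _ _ (sp_chain k sigma u j (J i) h)).
  by rewrite (nth_pre _ _ _ (sp_chain k sigma u (J i) j (ltnW h))).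
have Wpre : forall j n, leq n (size (P j)) -> pre (iprefix W n) (P j).
  move=> j n hn; apply: pre_of_agree => // i hi; exact: Wspec.
have WP : forall j, iprefix W (size (P j)) = P j.
  move=> j; apply: pre_eq; [exact: Wpre | by rewrite size_mkseq].
have eW : inf_val W = y.
  apply: Rle_antisym.
    apply: inf_val_le => n; have [j hj] := unb n.
    apply: Rle_trans (fin_val_pre _ _ (Wpre j n (ltnW hj))) _; rewrite ey; exact: svl.
  rewrite ey; apply: svu => j; rewrite -[sigma_prefix sigma u j]WP; exact: (proj1 (inf_val_bounds W _)).
case: (classic (infinitely W)) => [iW|fW].
  have tW : is_tilde y W by split => //.
  have tt : is_tilde y (tilde y).
    rewrite /tilde; apply: epsilon_spec; by exists W.
  have EE : forall i, tilde y i = W i.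
    apply: inf_val_inj; [exact: (proj1 tt) | exact: iW |].
    by rewrite -(proj2 tt) eW.
  move=> n; have [j hj] := unb n; exists j.
  have -> : iprefix (tilde y) n = iprefix W n by apply: eq_mkseq.
  apply: Wpre; exact: ltnW.
exfalso.
have [n0 hn0] : exists n0, forall m, leq n0 m -> W m = false.
  apply: NNPP => hh; apply: fW => n; apply: NNPP => hm; apply: hh; exists n => m hm'.
  case hW: (W m) => //; exfalso; apply: hm; by exists m.
apply: (dyad_contra (iprefix W n0) y) => //.
rewrite -eW; apply: Rle_antisym; last exact: (proj1 (inf_val_bounds W n0)).
apply: inf_val_le => m; case: (leqP n0 m) => h; last by apply: a_mono; exact: ltnW.
rewrite -(subnK h); move: (subn m n0) => d; elim: d => [|d IH]; first by rewrite add0n; lra.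
rewrite addSn aS hn0 ?leq_addl // /bv.
have : 0 / 2 ^ (d + n0).+1 = 0 by field; have := pow_lt 2 (d + n0).+1 ltac:(lra); lra.
lra.
Qed.

Lemma f0 k (sigma : block_subst k) weps : f_sigma sigma weps 0 = 0.
Proof.
rewrite /f_sigma; case: excluded_middle_informative => // H; exfalso; case: H => [h _]; lra.
Qed.

Lemma fval k (sigma : block_subst k) weps x :
  f_sigma sigma weps x <> 0 -> f_sigma sigma weps x = sigma_val sigma (tilde x).
Proof. rewrite /f_sigma; by case: excluded_middle_informative. Qed.

Theorem lemma4p1 (k : nat) (sigma : block_subst k) (weps : k.-tuple bool) :
  (2 <= k)%nat ->
  erasing_with sigma weps ->
  boundedly_erasing sigma ->
  weps <> [tuple true | _ < k] ->
  ~ optimal sigma /\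
  exists n : nat, forall x : R, 0 <= x <= 1 ->
    (forall m : nat, ~ dyadic01 (iter m (f_sigma sigma weps) x)) ->
    iter n (f_sigma sigma weps) x = 0.
Proof.
move=> hk hE [s [[hE2 [alt hC]] [N HN]]] hW.
have k0 : leq 1 k by apply: leq_trans hk.
have kill := bounded_kill k sigma s N HN.
split; first exact: not_opt k sigma s N k0 alt kill.
exists N => x _ nd.
pose f := f_sigma sigma weps.
have claim : forall m, iter m f x <> 0 -> forall n, exists L,
    pre (iprefix (tilde (iter m f x)) n) (iter m (ext_fin k s) (iprefix (tilde x) L)).
  elim=> [|m IH] hm n; first by exists n; exact: pre_refl.
  have hm' : iter m f x <> 0.
    move=> e; apply: hm; rewrite /= e; exact: f0.
  have [j hj] := key k sigma (tilde (iter m f x)) (iter m.+1 f x)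
    (fval k sigma weps _ hm) hm (nd m.+1) n.
  rewrite (@sigma_prefix_ext k sigma s _ _ k0 alt) in hj.
  have [L hL] := IH hm' (j * k)%nat.
  exists L; apply: (pre_trans _ _ _ hj); rewrite [iter m.+1 _ _]/=; exact: ext_pre.
apply: NNPP => hN; have [L hL] := claim N hN 1%nat.
by have := pre_size _ _ hL; rewrite kill size_mkseq.
Qed.
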